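(* Let $G$ be a finite set of items, $k=|G|$, and $1\le m\le k$. Then there exist quasi-fields $\Sigma,\Sigma'\subseteq 2^G$ with $|\Sigma|=|\Sigma'|=2^m$, a set of agents, and a type profile $\theta$ such that $$\frac{W_{\max}(\theta^{\Sigma})}{W_{\max}(\theta^{\Sigma'})}\ge\frac{m}{\lceil m^2/k\rceil}.$$
   Context: Combinatorial auction: a finite set $G$ of items and agents $N$; an outcome assigns pairwise disjoint bundles $o_i\subseteq G$ to the agents. A type $\theta_i$ of agent $i$ is a valuation $v_i(\cdot,\theta_i):2^G\to\mathbb{R}_{\ge0}$ with $v_i(\emptyset,\theta_i)=0$ and $v_i(B,\theta_i)\le v_i(C,\theta_i)$ whenever $B\subseteq C$. For a profile $x$ of bid functions $x_i:2^G\to\mathbb{R}$, $W_{\max}(x)=\max_{o}\sum_i x_i(o_i)$ over all outcomes $o$. A set $\Sigma\subseteq 2^G$ with $\emptyset\in\Sigma$ is a quasi-field if $B\in\Sigma$ implies $G\setminus B\in\Sigma$, and $B,C\in\Sigma$ with $B\cap C=\emptyset$ implies $B\cup C\in\Sigma$. For a quasi-field $\Sigma$ the projection of a valuation $x_i$ is $x_i^\Sigma(B)=\max_{B'\in\Sigma,\,B'\subseteq B}x_i(B')$, and $\theta^\Sigma$ denotes the profile of projected true valuations $(v_i(\cdot,\theta_i)^\Sigma)_{i}$. *)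

(* Defs.v *)
From mathcomp Require Import all_boot all_order all_algebra.
Set Implicit Arguments. Unset Strict Implicit. Unset Printing Implicit Defensive.
Import Order.TTheory GRing.Theory Num.Theory.
Local Open Scope ring_scope.

Section CA.
Variables (R : realFieldType) (G : finType).

Definition valuation (v : {set G} -> R) : Prop :=
  [/\ v set0 = 0, (forall B, 0 <= v B) & (forall B C : {set G}, B \subset C -> v B <= v C)].

Definition quasi_field (S : {set {set G}}) : Prop :=
  [/\ set0 \in S,
      (forall B : {set G}, B \in S -> ~: B \in S) &
      (forall B C : {set G}, B \in S -> C \in S -> [disjoint B & C] -> B :|: C \in S)].

(* Projection x^Sigma(B) = max_{B' in Sigma, B' \subset B} x(B').
   When set0 \in S the range is nonempty and contains set0, so using x set0
   as the initial value gives exactly this maximum. *)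
Definition projection (S : {set {set G}}) (x : {set G} -> R) (B : {set G}) : R :=
  \big[Num.max/(x set0)]_(B' in S | B' \subset B) x B'.

Definition outcome (n : nat) (o : {ffun 'I_n -> {set G}}) : bool :=
  [forall i, forall j, (i != j) ==> [disjoint o i & o j]].

(* W_max(x) = max over outcomes o of sum_i x_i(o_i).  The all-empty outcome is
   always an outcome, so its value is a valid initial value for the max. *)
Definition Wmax (n : nat) (x : 'I_n -> {set G} -> R) : R :=
  \big[Num.max/(\sum_(i < n) x i set0)]_(o | outcome o) \sum_(i < n) x i (o i).

Definition proj_profile (n : nat) (S : {set {set G}}) (v : 'I_n -> {set G} -> R)
  : 'I_n -> {set G} -> R := fun i => projection S (v i).

End CA.

Definition ceil_div (a b : nat) : nat := ((a + b).-1 %/ b)%N.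

(* Main.v *)
Require Import Defs.
From mathcomp Require Import all_boot all_order all_algebra.
From mathcomp Require Import zify.
Import Order.TTheory GRing.Theory Num.Theory.
Local Open Scope ring_scope.
Set Implicit Arguments. Unset Strict Implicit.

Definition SQ (G I : finType) (phi : G -> I) : {set {set G}} :=
  [set phi @^-1: T | T : {set I} in powerset [set: I]].

Lemma mem_SQ (G I : finType) (phi : G -> I) (T : {set I}) : phi @^-1: T \in SQ phi.
Proof. by apply/imsetP; exists T => //; rewrite powersetE subsetT. Qed.

Lemma SQ_inv (G I : finType) (phi : G -> I) U :
  U \in SQ phi -> exists T : {set I}, U = phi @^-1: T.
Proof. by case/imsetP => T _ ->; exists T. Qed.

Lemma qf_SQ (G I : finType) (phi : G -> I) : quasi_field (SQ phi).
Proof.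
split.
- by rewrite -(preimset0 phi) mem_SQ.
- by move=> B /SQ_inv [T ->]; rewrite -preimsetC mem_SQ.
- by move=> B C /SQ_inv [T ->] /SQ_inv [T' ->] _; rewrite -preimsetU mem_SQ.
Qed.

Lemma card_SQ (G I : finType) (phi : G -> I) :
  (forall j, exists x, phi x = j) -> #|SQ phi| = (2 ^ #|I|)%N.
Proof.
move=> sur; rewrite card_in_imset ?card_powerset ?cardsT //.
move=> T T' _ _ E; apply/setP => j; have [x <-] := sur j.
have := congr1 (fun U : {set G} => x \in U) E; rewrite /= !inE.
by [].
Qed.


Lemma proj_ge (R : realFieldType) (G : finType) (S : {set {set G}}) (x : {set G} -> R) (B B' : {set G}) :
  B' \in S -> B' \subset B -> x B' <= projection S x B.
Proof.
move=> h1 h2; rewrite /projection (bigD1 B') /=; last by rewrite h1 h2.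
by rewrite le_max lexx.
Qed.

Lemma proj_le (R : realFieldType) (G : finType) (S : {set {set G}}) (x : {set G} -> R) (B : {set G}) c :
  (forall B', B' \in S -> B' \subset B -> x B' <= c) -> x set0 <= c ->
  projection S x B <= c.
Proof.
move=> h h0; rewrite /projection; apply: (big_ind (fun y => y <= c)) => //.
- by move=> a b ha hb; rewrite ge_max ha hb.
- by move=> i /andP[]; apply: h.
Qed.

Lemma Wmax_ge (R : realFieldType) (G : finType) n (x : 'I_n -> {set G} -> R) (o : {ffun 'I_n -> {set G}}) :
  outcome o -> \sum_(i < n) x i (o i) <= Wmax x.
Proof. by move=> ho; rewrite /Wmax (bigD1 o) //= le_max lexx. Qed.

Lemma Wmax_le (R : realFieldType) (G : finType) n (x : 'I_n -> {set G} -> R) c :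
  (forall o : {ffun 'I_n -> {set G}}, outcome o -> \sum_(i < n) x i (o i) <= c) ->
  Wmax x <= c.
Proof.
move=> h; rewrite /Wmax; apply: (big_ind (fun y => y <= c)).
- have := h [ffun => set0]; rewrite /=.
  under eq_bigr do rewrite ffunE. apply.
  apply/forallP => i; apply/forallP => j; apply/implyP => _.
  by rewrite ffunE disjoint_sym; apply/pred0P => y; rewrite /= ffunE inE.
- by move=> a b ha hb; rewrite ge_max ha hb.
- by move=> o ho; apply: h.
Qed.

Definition rk (G : finType) (x : G) : nat := enum_rank x.
Definition hub (k m : nat) : nat := maxn 1 (m * 2 - k).
Definition fn (m r : nat) : nat := if (r < m)%N then r else 0%N.
Definition gn (k m r : nat) : nat :=
  if (r < m)%N then minn r (hub k m).-1 else minn (hub k m + r - m) m.-1.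
Definition fF (G : finType) (m' : nat) (x : G) : 'I_m'.+1 := inord (fn m'.+1 (rk x)).
Definition gF (G : finType) (m' : nat) (x : G) : 'I_m'.+1 := inord (gn #|G| m'.+1 (rk x)).

Lemma fF_val (G : finType) m' (x : G) : fF m' x = fn m'.+1 (rk x) :> nat.
Proof. rewrite /fF inordK // /fn; case: ifP => //. Qed.

Lemma gF_val (G : finType) m' (x : G) : gF m' x = gn #|G| m'.+1 (rk x) :> nat.
Proof. rewrite /gF inordK // /gn; case: ifP => h; lia. Qed.

Lemma rk_ex (G : finType) r : (r < #|G|)%N -> exists x : G, rk x = r.
Proof. by move=> h; exists (enum_val (Ordinal h)); rewrite /rk enum_valK. Qed.

Lemma fF_sur (G : finType) m' : (m'.+1 <= #|G|)%N -> forall j, exists x : G, fF m' x = j.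
Proof.
move=> hk j; have [x hx] := rk_ex (leq_trans (ltn_ord j) hk).
by exists x; apply: ord_inj; rewrite fF_val hx /fn ltn_ord.
Qed.

Lemma gF_sur (G : finType) m' : (m'.+1 <= #|G|)%N -> forall j, exists x : G, gF m' x = j.
Proof.
move=> hk j.
have [hj|hj] := ltnP j (hub #|G| m'.+1).
  have hr : (j < #|G|)%N by apply: leq_trans (ltn_ord j) hk.
  have [x hx] := rk_ex hr; exists x; apply: ord_inj; rewrite gF_val hx /gn ltn_ord.
  move: hj; rewrite /hub; lia.
have hr : (m'.+1 + j - hub #|G| m'.+1 < #|G|)%N.
  have := ltn_ord j; move: hj; rewrite /hub; lia.
have [x hx] := rk_ex hr; exists x; apply: ord_inj; rewrite gF_val hx /gn.
have := ltn_ord j; move: hj; rewrite /hub; case: ifP; lia.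
Qed.

Lemma hub_le k m : (1 <= m)%N -> (m <= k)%N -> (hub k m <= ceil_div (m * m) k)%N.
Proof.
move=> h1 h2; rewrite /ceil_div leq_divRL; last by lia.
rewrite /hub; have [le|lt] := leqP (m * 2) k.
  have -> : (m * 2 - k = 0)%N by lia.
  rewrite (maxn_idPl _) //; lia.
have -> : maxn 1 (m * 2 - k) = (m * 2 - k)%N by lia.
nia.
Qed.

Definition vv (R : realFieldType) (G : finType) m' (i : 'I_m'.+1) (B : {set G}) : R :=
  if fF m' @^-1: [set i] \subset B then 1 else 0.

Lemma yF (G : finType) m' (y : G) (i : 'I_m'.+1) : rk y = i -> y \in fF m' @^-1: [set i].
Proof.
by move=> h; rewrite !inE; apply/eqP/ord_inj; rewrite fF_val h /fn ltn_ord.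
Qed.

Lemma countA (G : finType) m' (o : {ffun 'I_m'.+1 -> {set G}}) :
  (m'.+1 <= #|G|)%N -> outcome o ->
  (#|[set i | [exists U in SQ (gF m' (G:=G)),
        (U \subset o i) && (fF m' @^-1: [set i] \subset U)]]| <= hub #|G| m'.+1)%N.
Proof.
move=> hk ho.
set A := [set i | _].
set h := hub #|G| m'.+1.
have h1 : (1 <= h)%N by rewrite /h /hub; lia.
set s := map (fun i : 'I_m'.+1 => minn i h.-1) (enum A).
have -> : #|A| = size s by rewrite size_map cardE.
rewrite -(size_iota 0 h); apply: uniq_leq_size.
- rewrite map_inj_in_uniq ?enum_uniq // => i j; rewrite !mem_enum => Ai Aj eq.
  apply/eqP; apply/negPn/negP => neq.
  have [yi hyi] := rk_ex (leq_trans (ltn_ord i) hk).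
  have [yj hyj] := rk_ex (leq_trans (ltn_ord j) hk).
  have gij : gF m' yj = gF m' yi.
    by apply: ord_inj; rewrite !gF_val hyi hyj /gn !ltn_ord -/h eq.
  move: Ai; rewrite inE => /existsP [U /andP[US /andP[Uo FU]]].
  move: Aj; rewrite inE => /existsP [V /andP[VS /andP[Vo FV]]].
  have [T UT] := SQ_inv US.
  have yiU : yi \in U by apply: (subsetP FU); apply: yF.
  have yjU : yj \in U by move: yiU; rewrite UT !inE gij.
  have yjV : yj \in V by apply: (subsetP FV); apply: yF.
  have yjo : yj \in o i by apply: (subsetP Uo).
  have yjo' : yj \in o j by apply: (subsetP Vo).
  have := forallP ho i => /forallP /(_ j); rewrite neq /= => dis.
  by rewrite (disjointFr dis yjo) in yjo'.
- move=> z /mapP [i _ ->]; rewrite mem_iota; lia.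
Qed.

Lemma vv_le (R : realFieldType) (G : finType) m' (o : {ffun 'I_m'.+1 -> {set G}}) i :
  projection (SQ (gF m' (G:=G))) (@vv R G m' i) (o i) <=
  (i \in [set i | [exists U in SQ (gF m' (G:=G)),
        (U \subset o i) && (fF m' @^-1: [set i] \subset U)]])%:R.
Proof.
have key : forall B', B' \in SQ (gF m' (G:=G)) -> B' \subset o i ->
    @vv R G m' i B' <= (i \in [set i | [exists U in SQ (gF m' (G:=G)),
        (U \subset o i) && (fF m' @^-1: [set i] \subset U)]])%:R.
  move=> B' hB hBo; rewrite /vv; case: ifP => hF.
    have -> : i \in [set i | [exists U in SQ (gF m' (G:=G)),
        (U \subset o i) && (fF m' @^-1: [set i] \subset U)]].
      by rewrite inE; apply/existsP; exists B'; rewrite hB hBo hF.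
    by [].
  by rewrite ler0n.
apply: proj_le; first exact: key.
apply: key; last exact: sub0set.
by rewrite -(preimset0 (gF m' (G:=G))) mem_SQ.
Qed.

Theorem proposition4 (R : realFieldType) (G : finType) (m : nat) :
  (1 <= m)%N -> (m <= #|G|)%N ->
  exists (S S' : {set {set G}}) (n : nat) (v : 'I_n -> {set G} -> R),
    [/\ quasi_field S, quasi_field S', #|S| = (2 ^ m)%N & #|S'| = (2 ^ m)%N] /\
    (forall i, valuation (v i)) /\
    0 < Wmax (proj_profile S' v) /\
    (m%:R / (ceil_div (m * m) #|G|)%:R
       <= Wmax (proj_profile S v) / Wmax (proj_profile S' v)).
Proof.
case: m => [//|m'] _ hk.
exists (SQ (fF m' (G:=G))), (SQ (gF m' (G:=G))), m'.+1, (@vv R G m').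
have Fne : forall i : 'I_m'.+1, exists y : G, y \in fF m' @^-1: [set i].
  move=> i; have [y hy] := rk_ex (leq_trans (ltn_ord i) hk).
  by exists y; apply: yF.
split; first split.
- exact: qf_SQ.
- exact: qf_SQ.
- by rewrite card_SQ ?card_ord //; apply: fF_sur.
- by rewrite card_SQ ?card_ord //; apply: gF_sur.
split.
  move=> i; split.
  - rewrite /vv; case: ifP => // /subsetP h; have [y hy] := Fne i.
    by have := h y hy; rewrite inE.
  - by move=> B; rewrite /vv; case: ifP.
  - move=> B C BC; rewrite /vv; case: ifP => hB.
      by rewrite (subset_trans hB BC).
    by case: ifP.
have vge0 : forall (S : {set {set G}}) (i : 'I_m'.+1) (B : {set G}), set0 \in S ->
    0 <= projection S (@vv R G m' i) B.
  move=> S i B h0; apply: le_trans (proj_ge _ h0 (sub0set _)).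
  by rewrite /vv; case: ifP.
set W' := Wmax _; set W := Wmax _.
have W'pos : 0 < W'.
  pose o : {ffun 'I_m'.+1 -> {set G}} := [ffun i => if i == ord0 then setT else set0].
  have ho : outcome o.
    apply/forallP => i; apply/forallP => j; apply/implyP => nij.
    apply/pred0P => y; rewrite /= !ffunE.
    case: (i =P ord0) => [ei|]; case: (j =P ord0) => [ej|] //=; rewrite ?inE ?andbF //.
    by move: nij; rewrite ei ej eqxx.
  apply: lt_le_trans (Wmax_ge _ ho).
  rewrite (bigD1 ord0) //=.
  have h2 : 0 <= \sum_(i < m'.+1 | i != ord0) proj_profile (SQ (gF m' (G:=G))) (@vv R G m') i (o i).
    apply: sumr_ge0 => i _; apply: vge0.
    by rewrite -(preimset0 (gF m' (G:=G))) mem_SQ.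
  have h1 : 0 < proj_profile (SQ (gF m' (G:=G))) (@vv R G m') ord0 (o ord0).
    rewrite ffunE eqxx /proj_profile.
    apply: lt_le_trans (proj_ge _ _ (subxx _)); last first.
      by rewrite -(preimsetT (gF m' (G:=G))) mem_SQ.
    by rewrite /vv subsetT ltr01.
  by apply: (lt_le_trans h1); rewrite lerDl.
have W'le : W' <= (ceil_div (m'.+1 * m'.+1) #|G|)%:R.
  apply: Wmax_le => o ho.
  apply: le_trans (ler_sum _ (fun i _ => vv_le R o i)) _.
  rewrite -natr_sum ler_nat.
  set A := [set i | _].
  have -> : (\sum_(i < m'.+1) ((i \in A) : nat) = #|A|)%N.
    by rewrite -sum1_card [RHS]big_mkcond; apply: eq_bigr => i _; case: (_ \in _).
  apply: leq_trans (hub_le _ _); last exact: hk.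
    exact: countA.
  by [].
have Wge : m'.+1%:R <= W.
  pose o : {ffun 'I_m'.+1 -> {set G}} := [ffun i => fF m' @^-1: [set i]].
  have ho : outcome o.
    apply/forallP => i; apply/forallP => j; apply/implyP => nij.
    apply/pred0P => y; rewrite /= !ffunE !inE.
    apply/negP => /andP[/eqP -> /eqP eij]; by rewrite eij eqxx in nij.
  apply: le_trans (Wmax_ge _ ho).
  have -> : m'.+1%:R = \sum_(i < m'.+1) (1 : R) by rewrite sumr_const card_ord.
  apply: ler_sum => i _; rewrite ffunE /proj_profile.
  apply: le_trans (proj_ge _ (mem_SQ _ _) (subxx _)).
  by rewrite /vv subxx.
split => //.
have cpos : 0 < (ceil_div (m'.+1 * m'.+1) #|G|)%:R :> R by apply: lt_le_trans W'le.
apply: le_trans (_ : m'.+1%:R / W' <= _).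
  apply: ler_wpM2l => //.
  by rewrite lef_pV2 // posrE.
by apply: ler_wpM2r => //; rewrite invr_ge0 ltW.
Qed.
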